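(* Let $w>0$ and $c_w=\sum_{y=-\infty}^{\infty}e^{-y^2/(2w^2)}$. For integers $x,h$ with $|x|\leq h$ and $h$ even, $$\frac{1}{c_w}\sum_{y=-\infty}^{\infty}e^{-\frac{(y\pm x)^2+y^2}{4w^2}}\geq e^{-\frac{h^2}{8w^2}}.$$ *)

(* Defs.v *)
From Stdlib Require Import Reals ZArith.
From Coquelicot Require Import Coquelicot.
Open Scope R_scope.

Definition zsum (f : Z -> R) : R :=
  Series (fun n : nat => f (Z.of_nat n)) +
  Series (fun n : nat => f (- Z.of_nat (S n))%Z).

Definition cw (w : R) : R :=
  zsum (fun y => exp (- (IZR y) ^ 2 / (2 * w ^ 2))).

(* Main.v *)
Require Import Defs.
From Stdlib Require Import Reals ZArith Lra Lia Psatz.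
From Coquelicot Require Import Coquelicot.
Open Scope R_scope.

Definition Pq (K c : R) (n : nat) := exp (- (INR n + c) ^ 2 / K).
Definition Nq (K c : R) (n : nat) := exp (- (INR n + 1 - c) ^ 2 / K).
Definition Gq (K c : R) (y : Z) := exp (- (IZR y + c) ^ 2 / K).

Lemma exp_mono x y : x <= y -> exp x <= exp y.
Proof. intros H; destruct (Rle_lt_or_eq_dec _ _ H) as [H1|H1].
  left; now apply exp_increasing. subst; lra. Qed.

Lemma exp_pow_n t n : exp (INR n * t) = exp t ^ n.
Proof. induction n. simpl. rewrite Rmult_0_l, exp_0; reflexivity.
  rewrite S_INR, Rmult_plus_distr_r, Rmult_1_l, exp_plus, IHn. simpl; ring. Qed.

Lemma zsum_ext f g : (forall y, f y = g y) -> zsum f = zsum g.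
Proof. intros H; unfold zsum; f_equal; apply Series_ext; intro; apply H. Qed.

Lemma zsum_G K c : zsum (Gq K c) = Series (Pq K c) + Series (Nq K c).
Proof.
  unfold zsum; f_equal; apply Series_ext; intro n; unfold Gq, Pq, Nq.
  - rewrite <- INR_IZR_INZ; reflexivity.
  - rewrite opp_IZR, <- INR_IZR_INZ, S_INR.
    replace ((- (INR n + 1) + c) ^ 2) with ((INR n + 1 - c) ^ 2) by ring; reflexivity.
Qed.

Lemma ex_P K c : 0 < K -> ex_series (Pq K c).
Proof.
  intros HK.
  apply (ex_series_le (V := R_CompleteNormedModule) _ (fun n => exp (c ^ 2 / K) * (exp (- (1/2) / K)) ^ n)).
  - intro n. change (norm (Pq K c n)) with (Rabs (Pq K c n)).
    unfold Pq. rewrite Rabs_pos_eq by (left; apply exp_pos).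
    rewrite <- exp_pow_n, <- exp_plus. apply exp_mono.
    assert (Hn : INR n * (INR n - 1) >= 0).
    { destruct n. simpl; rewrite Rmult_0_l; lra. rewrite S_INR. pose proof (pos_INR n). nra. }
    assert (Hq : 0 <= (INR n + c) ^ 2 + c ^ 2 - INR n / 2) by (pose proof (pow2_ge_0 (INR n + 2*c)); nra).
    assert (HiK : 0 < / K) by (apply Rinv_0_lt_compat; lra).
    unfold Rdiv. nra.
  - apply (ex_series_scal_l (V := R_NormedModule)).
    apply ex_series_geom. rewrite Rabs_pos_eq by (left; apply exp_pos).
    apply Rlt_le_trans with (exp 0); [apply exp_increasing | rewrite exp_0; lra].
    assert (0 < (1/2) / K) by (apply Rdiv_lt_0_compat; lra). unfold Rdiv in *; lra.
Qed.

Lemma ex_N K c : 0 < K -> ex_series (Nq K c).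
Proof.
  intros HK. apply (ex_series_ext (Pq K (1 - c))). intro n; unfold Pq, Nq.
  replace (INR n + (1 - c)) with (INR n + 1 - c) by ring; reflexivity.
  now apply ex_P.
Qed.

Lemma shift1 K c : 0 < K -> zsum (Gq K (c + 1)) = zsum (Gq K c).
Proof.
  intros HK. rewrite !zsum_G.
  rewrite (Series_incr_1 (Pq K c)) by now apply ex_P.
  rewrite (Series_incr_1 (Nq K (c + 1))) by now apply ex_N.
  assert (E1 : Series (fun k => Pq K c (S k)) = Series (Pq K (c + 1))).
  { apply Series_ext; intro n; unfold Pq; rewrite S_INR.
    replace (INR n + 1 + c) with (INR n + (c + 1)) by ring; reflexivity. }
  assert (E2 : Series (fun k => Nq K (c + 1) (S k)) = Series (Nq K c)).
  { apply Series_ext; intro n; unfold Nq; rewrite S_INR.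
    replace (INR n + 1 + 1 - (c + 1)) with (INR n + 1 - c) by ring; reflexivity. }
  assert (E3 : Nq K (c + 1) 0 = Pq K c 0).
  { unfold Nq, Pq; change (INR 0) with 0.
    replace ((0 + 1 - (c + 1)) ^ 2) with ((0 + c) ^ 2) by ring; reflexivity. }
  rewrite E1, E2, E3. ring.
Qed.

Lemma shift_nat K c m : 0 < K -> zsum (Gq K (c + INR m)) = zsum (Gq K c).
Proof.
  intros HK; induction m. simpl; rewrite Rplus_0_r; reflexivity.
  rewrite S_INR, <- Rplus_assoc, shift1 by exact HK. exact IHm.
Qed.

Lemma shift_Z K c k : 0 < K -> zsum (Gq K (c + IZR k)) = zsum (Gq K c).
Proof.
  intros HK. destruct (Z_le_gt_dec 0 k) as [H|H].
  - destruct (Z_of_nat_complete _ H) as [m ->]. rewrite <- INR_IZR_INZ.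
    now apply shift_nat.
  - assert (H' : (0 <= - k)%Z) by lia.
    destruct (Z_of_nat_complete _ H') as [m Hm].
    replace k with (- Z.of_nat m)%Z by lia. rewrite opp_IZR, <- INR_IZR_INZ.
    rewrite <- (shift_nat K (c + - INR m) m HK).
    replace (c + - INR m + INR m) with c by ring; reflexivity.
Qed.

Lemma pair_ineq K u : 0 < K ->
  2 * exp (- (1/4) / K) * exp (- u ^ 2 / K) <=
  exp (- (u - 1/2) ^ 2 / K) + exp (- (u + 1/2) ^ 2 / K).
Proof.
  intros HK.
  set (E := exp (u / K)).
  assert (HE : 0 < E) by apply exp_pos.
  assert (A1 : exp (- (u - 1/2) ^ 2 / K) = exp (- (1/4) / K) * exp (- u ^ 2 / K) * E).
  { unfold E; rewrite <- !exp_plus; f_equal; field; lra. }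
  assert (A2 : exp (- (u + 1/2) ^ 2 / K) = exp (- (1/4) / K) * exp (- u ^ 2 / K) * / E).
  { unfold E; rewrite <- exp_Ropp, <- !exp_plus; f_equal; field; lra. }
  rewrite A1, A2.
  assert (HaG : 0 < exp (- (1/4) / K) * exp (- u ^ 2 / K))
    by (apply Rmult_lt_0_compat; apply exp_pos).
  assert (HE2 : 2 <= E + / E).
  { assert (E + / E - 2 = (E - 1) ^ 2 / E) by (field; lra).
    assert (0 <= (E - 1) ^ 2 / E).
    { unfold Rdiv; apply Rmult_le_pos. apply pow2_ge_0. left; apply Rinv_0_lt_compat; lra. }
    lra. }
  nra.
Qed.

Lemma half_bound K : 0 < K ->
  exp (- (1/4) / K) * zsum (Gq K 0) <= zsum (Gq K (1/2)).
Proof.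
  intros HK.
  assert (Hs : zsum (Gq K (-(1/2))) = zsum (Gq K (1/2))).
  { rewrite <- (shift1 K (-(1/2)) HK). f_equal; f_equal; lra. }
  set (a := exp (- (1/4) / K)).
  assert (2 * (a * zsum (Gq K 0)) <= zsum (Gq K (-(1/2))) + zsum (Gq K (1/2))).
  { rewrite !zsum_G.
    replace (Series (Pq K (-(1/2))) + Series (Nq K (-(1/2))) + (Series (Pq K (1/2)) + Series (Nq K (1/2))))
      with ((Series (Pq K (-(1/2))) + Series (Pq K (1/2))) + (Series (Nq K (-(1/2))) + Series (Nq K (1/2)))) by ring.
    rewrite <- (Series_plus (Pq K (-(1/2))) (Pq K (1/2))) by (apply ex_P; lra).
    rewrite <- (Series_plus (Nq K (-(1/2))) (Nq K (1/2))) by (apply ex_N; lra).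
    assert (Ha : 0 < a) by apply exp_pos.
    replace (2 * (a * (Series (Pq K 0) + Series (Nq K 0)))) with
      (2 * a * Series (Pq K 0) + 2 * a * Series (Nq K 0)) by ring.
    rewrite <- !Series_scal_l.
    apply Rplus_le_compat; apply Series_le.
    - intro n; split. left; apply Rmult_lt_0_compat; [lra| apply exp_pos].
      unfold Pq. pose proof (pair_ineq K (INR n) HK).
      replace (INR n + - (1/2)) with (INR n - 1/2) by ring.
      replace (INR n + 0) with (INR n) by ring. unfold a; lra.
    - apply (ex_series_plus (V := R_NormedModule)); [apply ex_P|apply ex_P]; lra.
    - intro n; split. left; apply Rmult_lt_0_compat; [lra| apply exp_pos].
      unfold Nq. pose proof (pair_ineq K (INR n + 1) HK).
      replace (INR n + 1 - - (1/2)) with (INR n + 1 + 1/2) by ring.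
      replace (INR n + 1 - 1/2) with (INR n + 1 - 1/2) by ring.
      replace (INR n + 1 - 0) with (INR n + 1) by ring. unfold a; lra.
    - apply (ex_series_plus (V := R_NormedModule)); [apply ex_N|apply ex_N]; lra. }
  lra.
Qed.

Lemma S0_pos K : 0 < K -> 0 < zsum (Gq K 0).
Proof.
  intros HK. rewrite zsum_G.
  rewrite (Series_incr_1 (Pq K 0)) by now apply ex_P.
  assert (Z0 : Series (fun n => 0 * Pq K 0 n) = 0) by (rewrite Series_scal_l; ring).
  assert (0 <= Series (fun k => Pq K 0 (S k))).
  { apply Rle_trans with (Series (fun n => 0 * Pq K 0 n)); [rewrite Z0; lra|].
    apply Series_le. intro n; split. lra. rewrite Rmult_0_l; left; apply exp_pos.
    apply (ex_series_ext (Pq K 1)). intro n; unfold Pq; rewrite S_INR.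
    replace (INR n + 1 + 0) with (INR n + 1) by ring; reflexivity. now apply ex_P. }
  assert (0 <= Series (Nq K 0)).
  { apply Rle_trans with (Series (fun n => 0 * Pq K 0 n)); [rewrite Z0; lra|].
    apply Series_le. intro n; split. lra. rewrite Rmult_0_l; left; apply exp_pos.
    now apply ex_N. }
  pose proof (exp_pos (- (INR 0 + 0) ^ 2 / K)). unfold Pq at 1. lra.
Qed.

Lemma main (w : R) (x h : Z) (hw : 0 < w)
    (hxh : (Z.abs x <= h)%Z) (heven : Z.Even h) :
  / cw w * zsum (fun y => exp (- ((IZR y + IZR x) ^ 2 + (IZR y) ^ 2) / (4 * w ^ 2)))
    >= exp (- (IZR h) ^ 2 / (8 * w ^ 2)).
Proof.
  set (K := 2 * w ^ 2).
  assert (HK : 0 < K) by (unfold K; nra).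
  assert (Hcw : cw w = zsum (Gq K 0)).
  { unfold cw; apply zsum_ext; intro y; unfold Gq, K. rewrite Rplus_0_r; reflexivity. }
  set (A := exp (- (IZR x ^ 2 / 4) / K)).
  assert (Hz : zsum (fun y => exp (- ((IZR y + IZR x) ^ 2 + (IZR y) ^ 2) / (4 * w ^ 2)))
               = A * zsum (Gq K (IZR x / 2))).
  { unfold zsum. rewrite Rmult_plus_distr_l, <- !Series_scal_l. f_equal; apply Series_ext; intro n;
    unfold A, Gq; rewrite <- exp_plus; f_equal; unfold K; field; lra. }
  assert (Hh : exp (- (IZR h) ^ 2 / (8 * w ^ 2)) = exp (- (IZR h ^ 2 / 4) / K)).
  { f_equal; unfold K; field; lra. }
  rewrite Hz, Hh, Hcw.
  pose proof (S0_pos K HK) as HS0.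
  assert (HA : 0 < A) by apply exp_pos.
  destruct heven as [m Hm].
  destruct (Z.Even_or_Odd x) as [[k Hk]|[k Hk]].
  - assert (Hxh2 : IZR x ^ 2 <= IZR h ^ 2).
    { assert (Hi : (x * x <= h * h)%Z).
      { destruct (Z.abs_spec x) as [[? E]|[? E]]; rewrite E in hxh; nia. }
      apply IZR_le in Hi. rewrite !mult_IZR in Hi. simpl; nra. }
    replace (IZR x / 2) with (0 + IZR k) by (rewrite Hk, mult_IZR; simpl; field).
    rewrite shift_Z by exact HK.
    replace (/ zsum (Gq K 0) * (A * zsum (Gq K 0))) with A by (field; lra).
    apply Rle_ge. unfold A. apply exp_mono.
    assert (0 < / K) by (apply Rinv_0_lt_compat; lra). unfold Rdiv; nra.
  - assert (Hxh2 : IZR x ^ 2 + 1 <= IZR h ^ 2).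
    { assert (Hi : (x * x + 1 <= h * h)%Z).
      { destruct (Z.abs_spec x) as [[? E]|[? E]]; rewrite E in hxh.
        - assert (x <= h - 1)%Z by lia. nia.
        - assert (- x <= h - 1)%Z by lia. nia. }
      apply IZR_le in Hi. rewrite plus_IZR, !mult_IZR in Hi. simpl; nra. }
    replace (IZR x / 2) with (1/2 + IZR k) by (rewrite Hk, plus_IZR, mult_IZR; simpl; field).
    rewrite shift_Z by exact HK.
    pose proof (half_bound K HK) as Hb.
    apply Rle_ge.
    apply Rle_trans with (/ zsum (Gq K 0) * (A * (exp (- (1/4) / K) * zsum (Gq K 0)))).
    + replace (/ zsum (Gq K 0) * (A * (exp (- (1/4) / K) * zsum (Gq K 0))))
        with (A * exp (- (1/4) / K)) by (field; lra).
      unfold A; rewrite <- exp_plus. apply exp_mono.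
      assert (0 < / K) by (apply Rinv_0_lt_compat; lra). unfold Rdiv; nra.
    + apply Rmult_le_compat_l. left; apply Rinv_0_lt_compat; lra.
      apply Rmult_le_compat_l; lra.
Qed.

Theorem lemma3 (w : R) (x h : Z) (hw : 0 < w)
    (hxh : (Z.abs x <= h)%Z) (heven : Z.Even h) :
  / cw w * zsum (fun y => exp (- ((IZR y + IZR x) ^ 2 + (IZR y) ^ 2) / (4 * w ^ 2)))
    >= exp (- (IZR h) ^ 2 / (8 * w ^ 2))
  /\
  / cw w * zsum (fun y => exp (- ((IZR y - IZR x) ^ 2 + (IZR y) ^ 2) / (4 * w ^ 2)))
    >= exp (- (IZR h) ^ 2 / (8 * w ^ 2)).
Proof.
  split. now apply main.
  rewrite (zsum_ext _ (fun y => exp (- ((IZR y + IZR (- x)) ^ 2 + (IZR y) ^ 2) / (4 * w ^ 2)))).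
  apply main; auto. rewrite Z.abs_opp; exact hxh.
  intro y; rewrite opp_IZR; reflexivity.
Qed.
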